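(* Consider an ensemble of $m$ learners $l_1,\dots,l_m$ processing a data stream of $n$ data elements, where $e_i$ denotes an access to the data structures of learner $l_i$ and $e_1,\dots,e_m$ are distinct, so that the training phase accesses each $e_i$ exactly $n$ times. Mini-batching provides optimal access locality: taking a single mini-batch containing the whole stream yields the trace $e_1^n e_2^n\cdots e_m^n$ (each $e_i$ accessed $n$ consecutive times, learner after learner), whose total reuse distance is $m(m+n-1)=\mathcal{O}(m^2)$ for fixed mini-batch size, and no other ordering of these accesses has a smaller total reuse distance.
   Context: A trace is a finite sequence of references to data items. The reuse distance of an access in a trace is the number of distinct data items accessed since the previous access to the same item, including the reused item itself (so a finite reuse distance is at least $1$ and at most the number $m$ of distinct items). The reuse distance of the first access to an item is $\infty$; in computing totals, every such infinite value is replaced by $m$. The total reuse distance of a trace is the sum of the reuse distances of all its accesses (with this convention). *)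

(* Defs.v *)
From mathcomp Require Import all_boot.
Set Implicit Arguments. Unset Strict Implicit. Unset Printing Implicit Defensive.

Section ReuseDistance.
Variable T : eqType.

(* Reuse distance of an access to [x] made right after the prefix [p] of a
   trace.  [None] encodes infinity (first access).  Otherwise it is the number
   of distinct items accessed since the previous access to [x] (exclusive),
   up to and including the current access (so including [x] itself):
   the items after the last occurrence of [x] in [p] are
   [take (index x (rev p)) (rev p)]. *)
Definition reuse_distance (p : seq T) (x : T) : option nat :=
  if x \in p then
    let r := rev p in Some (size (undup (x :: take (index x r) r)))
  else None.

Fixpoint total_rd_aux (m : nat) (p s : seq T) : nat :=
  match s with
  | [::] => 0
  | x :: s' => odflt m (reuse_distance p x) + total_rd_aux m (rcons p x) s'
  end.

Definition total_reuse_distance (s : seq T) : nat :=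
  total_rd_aux (size (undup s)) [::] s.

Definition minibatch_trace (e : seq T) (n : nat) : seq T :=
  flatten [seq nseq n x | x <- e].

End ReuseDistance.

(* Main.v *)
Require Import Defs.
From mathcomp Require Import all_boot.
From mathcomp Require Import zify.

Section Aux.
Variable T : eqType.

Fixpoint nc (p s : seq T) : nat :=
  match s with
  | [::] => 0
  | x :: s' => (x \notin p) + nc (rcons p x) s'
  end.

Lemma size_undup_rcons (p : seq T) x :
  size (undup (rcons p x)) = size (undup p) + (x \notin p).
Proof.
have H : rcons p x =i x :: p by move=> y; rewrite mem_rcons.
rewrite (perm_size (perm_undup H)) /=.
by case: (x \in p) => /=; lia.
Qed.

Lemma nc_undup (p s : seq T) : nc p s + size (undup p) = size (undup (p ++ s)).
Proof.
elim: s p => [|x s IH] p /=; first by rewrite cats0.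
rewrite -cat_rcons -IH size_undup_rcons; lia.
Qed.

Lemma nc_le (p s : seq T) : nc p s <= size s.
Proof. elim: s p => [|x s IH] p //=; have := IH (rcons p x); case: (x \in p) => /=; lia. Qed.

Lemma total_lb m (p s : seq T) : 0 < m ->
  m * nc p s + (size s - nc p s) <= total_rd_aux m p s.
Proof.
move=> m0; elim: s p => [|x s IH] p /=; first by rewrite muln0.
have := IH (rcons p x); have := nc_le (rcons p x) s.
rewrite /reuse_distance.
set l := undup _.
have xl : x \in l by rewrite mem_undup mem_head.
have : 0 < size l by case: l xl.
case: (x \in p) => /=; lia.
Qed.

Lemma total_cat m (p s1 s2 : seq T) :
  total_rd_aux m p (s1 ++ s2) = total_rd_aux m p s1 + total_rd_aux m (p ++ s1) s2.
Proof.
elim: s1 p => [|x s1 IH] p /=; first by rewrite cats0.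
by rewrite IH cat_rcons addnA.
Qed.

Lemma total_nseq m (q : seq T) x k :
  total_rd_aux m (rcons q x) (nseq k x) = k.
Proof.
elim: k q => [|k IH] q //=.
rewrite IH /reuse_distance mem_rcons mem_head rev_rcons /= eqxx /=.
by rewrite add1n.
Qed.

Lemma total_mb m (p e : seq T) n : 0 < n -> uniq e -> (forall x, x \in e -> x \notin p) ->
  total_rd_aux m p (minibatch_trace e n) = size e * m + size e * (n - 1).
Proof.
move=> n0; elim: e p => [|x e IH] p //= /andP[xe ue] He.
rewrite /minibatch_trace /= total_cat.
have -> : total_rd_aux m p (nseq n x) = m + (n - 1).
  case: n n0 {IH} => [|n] //= _.
  rewrite /reuse_distance (negbTE (He x (mem_head _ _))) /=.
  by rewrite total_nseq subn1.
rewrite -/(minibatch_trace e n) IH //.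
  lia.
move=> y ye; rewrite mem_cat negb_or He ?inE ?ye ?orbT //=.
rewrite mem_nseq negb_and; apply/orP; right.
by apply/eqP=> yx; subst y; rewrite ye in xe.
Qed.

Lemma mb_mem (e : seq T) n : 0 < n -> minibatch_trace e n =i e.
Proof.
move=> n0 y; apply/flatten_mapP/idP.
  by case=> x xe; rewrite mem_nseq => /andP[_ /eqP ->].
by move=> ye; exists y => //; rewrite mem_nseq n0 eqxx.
Qed.

Lemma size_mb (e : seq T) n : size (minibatch_trace e n) = size e * n.
Proof.
elim: e => //= x e IH; rewrite /minibatch_trace /= size_cat size_nseq.
by rewrite -/(minibatch_trace e n) IH mulSn.
Qed.

End Aux.

Theorem theorem3 (T : eqType) (e : seq T) (n : nat) :
  uniq e -> 0 < n ->
  total_reuse_distance (minibatch_trace e n) = size e * (size e + n - 1)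
  /\ (forall s : seq T, perm_eq s (minibatch_trace e n) ->
        total_reuse_distance (minibatch_trace e n) <= total_reuse_distance s).
Proof.
move=> ue n0.
have Hm : size (undup (minibatch_trace e n)) = size e.
  by rewrite (perm_size (perm_undup ((@mb_mem _ e n n0)))) undup_id.
have Htot : total_reuse_distance (minibatch_trace e n) = size e * (size e + n - 1).
  rewrite /total_reuse_distance Hm total_mb //.
  case: (size e) => [|k]; first by [].
  by rewrite -mulnDr; congr (_ * _); lia.
split=> // s Hs.
rewrite Htot /total_reuse_distance.
have Hu : size (undup s) = size e.
  by rewrite -Hm; apply: perm_size; apply: perm_undup; apply: perm_mem.
have Hsz : size s = size e * n by rewrite (perm_size Hs) size_mb.
rewrite Hu.
case E: (size e) => [|k]; first by [].
have := @total_lb _ (size e) [::] s.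
have := @nc_undup _ [::] s; rewrite /= addn0 Hu E Hsz => -> /(_ isT).
nia.
Qed.
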